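(* A diamond-free graph is clique simplicial if and only if it is edge simplicial.
   Context: A vertex $v$ is simplicial if $N[v]$ is a clique; a clique is simplicial if it equals $N[v]$ for a simplicial vertex $v$. A graph is clique simplicial if every inclusion-maximal clique is simplicial, and edge simplicial if every edge lies in a simplicial clique. The diamond is $K_4$ minus one edge; diamond-free means no induced diamond. *)

(* Defs.v *)
From mathcomp Require Import all_boot.
Set Implicit Arguments. Unset Strict Implicit. Unset Printing Implicit Defensive.

Definition simple_graph (T : finType) (e : rel T) : Prop :=
  symmetric e /\ irreflexive e.

Definition is_clique (T : finType) (e : rel T) (K : {set T}) : bool :=
  [forall x in K, forall y in K, (x != y) ==> e x y].

Definition closed_nbhd (T : finType) (e : rel T) (v : T) : {set T} :=
  v |: [set u | e v u].

Definition simplicial_vertex (T : finType) (e : rel T) (v : T) : bool :=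
  is_clique e (closed_nbhd e v).

Definition simplicial_clique (T : finType) (e : rel T) (K : {set T}) : Prop :=
  exists v, simplicial_vertex e v /\ K = closed_nbhd e v.

Definition maximal_clique (T : finType) (e : rel T) (K : {set T}) : bool :=
  maxset (is_clique e) K.

Definition clique_simplicial (T : finType) (e : rel T) : Prop :=
  forall K : {set T}, maximal_clique e K -> simplicial_clique e K.

Definition edge_simplicial (T : finType) (e : rel T) : Prop :=
  forall x y : T, e x y ->
    exists K : {set T}, [/\ simplicial_clique e K, x \in K & y \in K].

(* Induced diamond (K4 minus the edge c d) on distinct a b c d. *)
Definition induced_diamond (T : finType) (e : rel T) (a b c d : T) : Prop :=
  [/\ uniq [:: a; b; c; d],
      [&& e a b, e a c, e a d, e b c & e b d] & ~~ e c d].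

Definition diamond_free (T : finType) (e : rel T) : Prop :=
  forall a b c d : T, ~ induced_diamond e a b c d.

(* Main.v *)
Require Import Defs.
From mathcomp Require Import all_boot.

Lemma cliqueE (T : finType) (e : rel T) (K : {set T}) :
  is_clique e K -> forall x y, x \in K -> y \in K -> x != y -> e x y.
Proof.
move=> /forallP H x y xK yK nxy.
by have /implyP/(_ xK)/forallP/(_ y)/implyP/(_ yK)/implyP/(_ nxy) := H x.
Qed.

Arguments cliqueE {T e K}.

Lemma cliqueI (T : finType) (e : rel T) (K : {set T}) :
  (forall x y, x \in K -> y \in K -> x != y -> e x y) -> is_clique e K.
Proof.
move=> H; apply/forallP=> x; apply/implyP=> xK; apply/forallP=> y.
apply/implyP=> yK; apply/implyP=> nxy; exact: H.
Qed.

Lemma in_cn (T : finType) (e : rel T) v w :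
  (w \in closed_nbhd e v) = (w == v) || e v w.
Proof. by rewrite !inE. Qed.

Lemma diam_step (T : finType) (e : rel T) (K : {set T}) x y v :
  symmetric e -> irreflexive e -> diamond_free e -> is_clique e K ->
  x \in K -> y \in K -> x != y ->
  x \in closed_nbhd e v -> y \in closed_nbhd e v ->
  K \subset closed_nbhd e v.
Proof.
move=> esym eirr df Kcl xK yK nxy xS yS.
apply/subsetP=> w wK; rewrite in_cn.
case: (eqVneq w v) => //= nwv.
case: (eqVneq w x) => [wx | nwx].
  by move: xS; rewrite in_cn -wx; case/orP=> [/eqP wv|//]; rewrite wv eqxx in nwv.
case: (eqVneq w y) => [wy | nwy].
  by move: yS; rewrite in_cn -wy; case/orP=> [/eqP wv|//]; rewrite wv eqxx in nwv.
move: xS yS; rewrite !in_cn.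
case: (eqVneq x v) => [<- _ _ | nxv /= xv].
  by rewrite (cliqueE Kcl x w) // eq_sym.
case: (eqVneq y v) => [<- _ | nyv /= yv].
  by rewrite (cliqueE Kcl y w) // eq_sym.
case evw: (e v w) => //.
exfalso; apply: (df x y v w); split.
- rewrite /= !inE !negb_or nxy nxv nyv eq_sym nwx eq_sym nwy eq_sym nwv.
  done.
- rewrite (cliqueE Kcl x y) // (cliqueE Kcl x w) ?(eq_sym x) //.
  rewrite (cliqueE Kcl y w) ?(eq_sym y) //.
  by rewrite esym xv esym yv.
- by rewrite evw.
Qed.

Theorem mainTheorem13 (T : finType) (e : rel T) :
  0 < #|T| -> simple_graph e -> diamond_free e ->
  (clique_simplicial e <-> edge_simplicial e).
Proof.
move=> T0 [esym eirr] dfree; split.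
- move=> cs x y exy.
  have nxy : x != y by apply/eqP=> exy'; rewrite exy' eirr in exy.
  have cl : is_clique e [set x; y].
    apply: cliqueI => a b; rewrite !inE => /orP[]/eqP-> /orP[]/eqP->;
      rewrite ?eqxx //= => _; by rewrite // esym.
  have [K mK sub] := maxset_exists cl.
  exists K; split; first exact: cs.
  + by apply: (subsetP sub); rewrite !inE eqxx.
  + by apply: (subsetP sub); rewrite !inE eqxx orbT.
- move=> es K mK.
  have Kcl : is_clique e K := maxsetp mK.
  case/card_gt0P: T0 => x0 _.
  case: (set_0Vmem K) => [K0 | [x xK]].
    have c1 : is_clique e [set x0].
      by apply: cliqueI => a b; rewrite !inE => /eqP-> /eqP->; rewrite eqxx.
    have := maxsetsup mK c1; rewrite K0 sub0set => /(_ isT) E.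
    by have := set11 x0; rewrite E inE.
  case: (boolP [exists y in K, y != x]) => [/existsP[y /andP[yK nyx]] | none].
    have exy : e x y by apply: (cliqueE Kcl); rewrite // eq_sym.
    have [S [[v [vs ->]] xS yS]] := es x y exy.
    have sub : K \subset closed_nbhd e v.
      by apply: (@diam_step _ _ _ _ _ _ esym eirr dfree Kcl xK yK _ xS yS); rewrite eq_sym.
    by exists v; rewrite (maxsetsup mK vs sub).
  have KE : K = [set x].
    apply/setP=> z; rewrite inE; apply/idP/eqP => [zK|->//].
    by apply/eqP; apply: contraNT none => nzx; apply/existsP; exists z; rewrite zK.
  have iso : forall u, ~~ e x u.
    move=> u; apply/negP=> exu.
    have c2 : is_clique e [set x; u].
      apply: cliqueI => a b; rewrite !inE => /orP[]/eqP-> /orP[]/eqP->;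
        rewrite ?eqxx //= => _; by rewrite // esym.
    have := maxsetsup mK c2; rewrite KE sub1set !inE eqxx => /(_ isT) E.
    have : u \in [set x] by rewrite -E !inE eqxx orbT.
    by rewrite inE => /eqP eux; rewrite eux eirr in exu.
  have NE : closed_nbhd e x = [set x].
    by apply/setP=> z; rewrite in_cn inE (negbTE (iso z)) orbF.
  exists x; split; last by rewrite NE.
  by rewrite /simplicial_vertex NE -KE.
Qed.
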